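(* Let $G_2=BS(1,2)=\langle a,b\mid bab^{-1}=a^2\rangle$ and let $\Gamma_2$ be its Cayley graph with respect to $\{a,b\}$. If $\sigma$ is a geodesic in $\Gamma_2$, then $\sigma$ does not contain three distinct $b$-edges $e_1,e_2,e_3$ with $h(e_1)=h(e_2)=h(e_3)$.
   Context: $\Gamma_2$ has vertex set $G_2$ and edges $\{g,gs\}$ for $s\in\{a^{\pm1},b^{\pm1}\}$; an edge $\{g,gb\}$ is a $b$-edge and $\{g,ga\}$ an $a$-edge. The height $h(\omega)\in\mathbb{Z}$ of $\omega\in G_2$ is the integer with $\omega=a^kb^{h(\omega)}$ in the abelianization of $G_2$ for some $k$ (i.e., the exponent sum of $b$ in any word representing $\omega$). For a $b$-edge $e=\{v,w\}$, $h(e)=\max\{h(v),h(w)\}$. *)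

(* Defs.v *)
(* BS(1,2) = <a,b | b a b^-1 = a^2> given by its presentation:
   group elements are words over {a, a^-1, b, b^-1} modulo the smallest
   congruence containing free cancellation and the defining relator. *)
From Stdlib Require Import List ZArith Lia.
Import ListNotations.

Inductive letter : Type := A | Ai | B | Bi.

Definition linv (x : letter) : letter :=
  match x with A => Ai | Ai => A | B => Bi | Bi => B end.

Definition word := list letter.

Inductive weq : word -> word -> Prop :=
| weq_refl u : weq u u
| weq_sym u v : weq u v -> weq v u
| weq_trans u v w : weq u v -> weq v w -> weq u w
| weq_cong u u' v v' : weq u u' -> weq v v' -> weq (u ++ v) (u' ++ v')
| weq_free x : weq [x; linv x] []
| weq_rel : weq [B; A; Bi] [A; A].

Fixpoint bsum (w : word) : Z :=
  match w with
  | [] => 0%Z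
  | B :: t => (1 + bsum t)%Z
  | Bi :: t => (-1 + bsum t)%Z
  | _ :: t => bsum t
  end.

Definition height (w : word) : Z := bsum w.

(* An edge path in Gamma_2 starting at the vertex (represented by) g and
   following the letters of w.  Its i-th vertex is g w_1 ... w_i. *)
Definition pvert (g w : word) (i : nat) : word := g ++ firstn i w.

Definition geodesic (g w : word) : Prop :=
  forall u : word, weq (g ++ u) (g ++ w) -> length w <= length u.

Definition is_bedge (w : word) (i : nat) : Prop :=
  i < length w /\ (nth i w A = B \/ nth i w A = Bi).

Definition edge_height (g w : word) (i : nat) : Z :=
  Z.max (height (pvert g w i)) (height (pvert g w (S i))).

Definition same_edge (g w : word) (i j : nat) : Prop :=
  (weq (pvert g w i) (pvert g w j) /\ weq (pvert g w (S i)) (pvert g w (S j))) \/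
  (weq (pvert g w i) (pvert g w (S j)) /\ weq (pvert g w (S i)) (pvert g w j)).

(* Main.v *)
Require Import Defs.
From Stdlib Require Import List ZArith Lia Setoid Morphisms.
Import ListNotations.

Lemma weq_equiv : Equivalence weq.
Proof. split; [intro; apply weq_refl | intros ??; apply weq_sym | intros ???; apply weq_trans]. Qed.
#[local] Existing Instance weq_equiv.

#[local] Instance app_mor : Proper (weq ==> weq ==> weq) (@app letter).
Proof. intros ?? H ?? H'; apply weq_cong; auto. Qed.

#[local] Instance cons_mor : Proper (eq ==> weq ==> weq) (@cons letter).
Proof. intros x y -> u v H. change (weq ([y] ++ u) ([y] ++ v)). apply weq_cong; auto. apply weq_refl. Qed.

Lemma wc l u v r : weq u v -> weq (l ++ u ++ r) (l ++ v ++ r).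
Proof. intros H; rewrite H; reflexivity. Qed.

Lemma fBBi : weq [B;Bi] []. Proof. exact (weq_free B). Qed.
Lemma fBiB : weq [Bi;B] []. Proof. exact (weq_free Bi). Qed.
Lemma fAAi : weq [A;Ai] []. Proof. exact (weq_free A). Qed.
Lemma fAiA : weq [Ai;A] []. Proof. exact (weq_free Ai). Qed.

Lemma R2 : weq [B;A] [A;A;B].
Proof.
  transitivity ([B;A] ++ [Bi;B] ++ []). { rewrite fBiB. reflexivity. }
  exact (wc [] [B;A;Bi] [A;A] [B] weq_rel).
Qed.
Lemma R3 : weq [A;Bi] [Bi;A;A].
Proof.
  transitivity ([] ++ [Bi;B] ++ [A;Bi]). { rewrite fBiB. reflexivity. }
  exact (wc [Bi] [B;A;Bi] [A;A] [] weq_rel).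
Qed.
Lemma R4 : weq [Ai;Bi] [Bi;Ai;Ai].
Proof.
  transitivity ([Ai;Bi] ++ ([A] ++ [A;Ai] ++ [Ai])).
  { rewrite fAAi. change ([Ai; Bi] ++ [A] ++ [] ++ [Ai]) with ([Ai;Bi] ++ [A;Ai]). rewrite fAAi. rewrite app_nil_r. reflexivity. }
  transitivity ([Ai] ++ [A;Bi] ++ [Ai;Ai]).
  { exact (wc [Ai] [Bi;A;A] [A;Bi] [Ai;Ai] (weq_sym _ _ R3)). }
  exact (wc [] [Ai;A] [] [Bi;Ai;Ai] fAiA).
Qed.
Lemma R5 : weq [B;Ai] [Ai;Ai;B].
Proof.
  transitivity ([B;Ai] ++ [Bi;B] ++ []). { rewrite fBiB. reflexivity. }
  transitivity ([B] ++ [Bi;Ai;Ai] ++ [B]).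
  { exact (wc [B] [Ai;Bi] _ [B] R4). }
  exact (wc [] [B;Bi] [] [Ai;Ai;B] fBBi).
Qed.

Definition isa (x : letter) := x = A \/ x = Ai.
Definition aword (u : word) := Forall isa u.

Fixpoint dbl (u : word) : word := match u with [] => [] | x :: t => x :: x :: dbl t end.
Fixpoint dbln n u := match n with 0 => u | S n => dbln n (dbl u) end.

Lemma aword_dbl u : aword u -> aword (dbl u).
Proof. induction 1; simpl; [constructor| apply Forall_cons; [exact H| apply Forall_cons; auto]]. Qed.
Lemma aword_dbln n u : aword u -> aword (dbln n u).
Proof. revert u; induction n; simpl; auto using aword_dbl. Qed.
Lemma aword_app u v : aword u -> aword v -> aword (u ++ v).
Proof. intros; apply Forall_app; auto. Qed.

Lemma comm_letter x y : isa x -> isa y -> weq [x;y] [y;x].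
Proof.
  intros [-> | ->] [-> | ->]; try reflexivity.
  - rewrite fAAi, fAiA; reflexivity.
  - rewrite fAAi, fAiA; reflexivity.
Qed.

Lemma comm_lw x v : isa x -> aword v -> weq (x :: v) (v ++ [x]).
Proof.
  intros Hx; induction 1; simpl. reflexivity.
  change (x :: x0 :: l) with ([x;x0] ++ l). rewrite (comm_letter x x0 Hx H). simpl.
  rewrite IHForall. reflexivity.
Qed.

Lemma aword_comm u v : aword u -> aword v -> weq (u ++ v) (v ++ u).
Proof.
  intros Hu Hv; induction Hu; simpl. rewrite app_nil_r; reflexivity.
  rewrite IHHu. change (x :: v ++ l) with ((x :: v) ++ l). rewrite (comm_lw x v H Hv).
  rewrite <- app_assoc. reflexivity.
Qed.

Lemma B_dbl u : aword u -> weq (B :: u) (dbl u ++ [B]).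
Proof.
  induction 1; simpl. reflexivity.
  change (B :: x :: l) with ([B;x] ++ l).
  destruct H as [-> | ->]; [rewrite R2 | rewrite R5]; simpl; rewrite IHForall; reflexivity.
Qed.

Lemma dbl_Bi u : aword u -> weq (u ++ [Bi]) (Bi :: dbl u).
Proof.
  induction 1; simpl. reflexivity.
  rewrite IHForall. change (x :: Bi :: dbl l) with ([x;Bi] ++ dbl l).
  destruct H as [-> | ->]; [rewrite R3 | rewrite R4]; reflexivity.
Qed.

Lemma dbln_Bi n u : aword u -> weq (u ++ repeat Bi n) (repeat Bi n ++ dbln n u).
Proof.
  revert u; induction n; intros u Hu; simpl. rewrite app_nil_r; reflexivity.
  change (u ++ Bi :: repeat Bi n) with (u ++ [Bi] ++ repeat Bi n).
  rewrite app_assoc, (dbl_Bi u Hu). simpl. rewrite IHn by (apply aword_dbl; auto). reflexivity.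
Qed.

Definition nf n u l := repeat Bi n ++ u ++ repeat B l.

Lemma normal w : exists n u l, aword u /\ weq w (nf n u l).
Proof.
  induction w as [|x w IH].
  - exists 0, [], 0; split. constructor. reflexivity.
  - destruct IH as (n & u & l & Hu & Hw). unfold nf in *.
    destruct x.
    + exists n, (dbln n [A] ++ u), l. split. apply aword_app; auto. apply aword_dbln; repeat constructor.
      rewrite Hw. change (A :: repeat Bi n ++ u ++ repeat B l) with (([A] ++ repeat Bi n) ++ u ++ repeat B l).
      rewrite dbln_Bi by (repeat constructor). rewrite !app_assoc. reflexivity.
    + exists n, (dbln n [Ai] ++ u), l. split. apply aword_app; auto. apply aword_dbln; repeat constructor; right; auto.
      rewrite Hw. change (Ai :: repeat Bi n ++ u ++ repeat B l) with (([Ai] ++ repeat Bi n) ++ u ++ repeat B l).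
      rewrite dbln_Bi by (repeat constructor; right; auto). rewrite !app_assoc. reflexivity.
    + destruct n as [|n]; simpl.
      * exists 0, (dbl u), (S l). split. apply aword_dbl; auto.
        rewrite Hw. change (B :: u ++ repeat B l) with ((B :: u) ++ repeat B l). simpl. change (B :: u ++ repeat B l) with ((B :: u) ++ repeat B l). rewrite (B_dbl u Hu).
        try (rewrite <- app_assoc; reflexivity).
      * exists n, u, l. split; auto. rewrite Hw. simpl. change (B :: Bi :: ?r) with ([B;Bi] ++ r). rewrite fBBi. reflexivity.
    + exists (S n), u, l. split; auto. rewrite Hw. reflexivity.
Qed.

Lemma bsum_app u v : bsum (u ++ v) = (bsum u + bsum v)%Z.
Proof. induction u as [|x u IH]; cbn [bsum app]. lia. destruct x; cbn [bsum]; rewrite IH; lia. Qed.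

Lemma bsum_weq u v : weq u v -> bsum u = bsum v.
Proof. induction 1; try congruence. rewrite !bsum_app; congruence. destruct x; reflexivity. reflexivity. Qed.

Lemma bsum_aword u : aword u -> bsum u = 0%Z.
Proof. induction 1; simpl; auto. destruct H as [-> | ->]; auto. Qed.

Lemma bsum_rep x n : bsum (repeat x n) = (Z.of_nat n * bsum [x])%Z.
Proof. induction n; simpl repeat. simpl; lia. change (x :: repeat x n) with ([x] ++ repeat x n). rewrite bsum_app, IHn. lia. Qed.

Lemma bsum_nf n u l : aword u -> bsum (nf n u l) = (Z.of_nat l - Z.of_nat n)%Z.
Proof. intros H; unfold nf; rewrite !bsum_app, !bsum_rep, (bsum_aword u H). simpl bsum. lia. Qed.

Lemma lift1 n u : aword u -> weq (nf n u n) (nf (S n) (dbl u) (S n)).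
Proof.
  intros Hu. unfold nf.
  transitivity (repeat Bi n ++ ([Bi;B] ++ u) ++ repeat B n).
  { rewrite fBiB. reflexivity. }
  transitivity (repeat Bi n ++ [Bi] ++ (B :: u) ++ repeat B n).
  { rewrite <- !app_assoc. reflexivity. }
  rewrite (B_dbl u Hu). simpl repeat. rewrite repeat_cons. rewrite <- !app_assoc. reflexivity.
Qed.

Lemma lift n d u : aword u -> exists u', aword u' /\ weq (nf n u n) (nf (n + d) u' (n + d)).
Proof.
  revert n u; induction d; intros n u Hu.
  - exists u; rewrite Nat.add_0_r; split; auto; reflexivity.
  - destruct (IHd (S n) (dbl u)) as (u' & H1 & H2). apply aword_dbl; auto.
    exists u'; split; auto. rewrite (lift1 n u Hu). rewrite H2. replace (S n + d) with (n + S d) by lia. reflexivity.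
Qed.

Lemma BBi n : weq (repeat B n ++ repeat Bi n) [].
Proof.
  induction n. reflexivity.
  simpl repeat at 2. rewrite repeat_cons. simpl. rewrite app_assoc, IHn. simpl. exact fBBi.
Qed.

Lemma nf_mul N u v : weq (nf N u N ++ nf N v N) (nf N (u ++ v) N).
Proof.
  unfold nf. transitivity (repeat Bi N ++ u ++ (repeat B N ++ repeat Bi N) ++ v ++ repeat B N).
  { rewrite !app_assoc; reflexivity. }
  rewrite BBi. simpl. rewrite !app_assoc; reflexivity.
Qed.

Lemma comm0 x y : bsum x = 0%Z -> bsum y = 0%Z -> weq (x ++ y) (y ++ x).
Proof.
  intros Hx Hy.
  destruct (normal x) as (n & u & l & Hu & Ex).
  destruct (normal y) as (p & v & q & Hv & Ey).
  pose proof (bsum_weq _ _ Ex) as bx. rewrite bsum_nf in bx by auto.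
  pose proof (bsum_weq _ _ Ey) as by'. rewrite bsum_nf in by' by auto.
  assert (l = n) by lia. assert (q = p) by lia. subst l q.
  destruct (lift n p u Hu) as (u' & Hu' & Ex'). destruct (lift p n v Hv) as (v' & Hv' & Ey').
  rewrite Ex, Ey, Ex', Ey'. rewrite (Nat.add_comm p n).
  rewrite !nf_mul. unfold nf. rewrite (aword_comm u' v') by auto. reflexivity.
Qed.

Lemma pat1 u1 u2 : bsum u1 = 0%Z -> bsum u2 = 0%Z ->
  weq ([B] ++ u1 ++ [Bi] ++ u2 ++ [B]) (u2 ++ [B] ++ u1).
Proof.
  intros H1 H2.
  assert (Hx : bsum (B :: u1 ++ [Bi]) = 0%Z) by (cbn [bsum]; rewrite bsum_app; cbn [bsum]; lia).
  transitivity (((B :: u1 ++ [Bi]) ++ u2) ++ [B]). { simpl; rewrite <- ?app_assoc; simpl; rewrite <- ?app_assoc; reflexivity. }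
  rewrite (comm0 _ _ Hx H2). transitivity (u2 ++ B :: u1 ++ ([Bi] ++ [B])).
  { simpl; rewrite <- ?app_assoc; simpl; rewrite <- ?app_assoc; reflexivity. }
  simpl. rewrite fBiB, app_nil_r. reflexivity.
Qed.

Lemma pat2 u1 u2 : bsum u1 = 0%Z -> bsum u2 = 0%Z ->
  weq ([Bi] ++ u1 ++ [B] ++ u2 ++ [Bi]) (u2 ++ [Bi] ++ u1).
Proof.
  intros H1 H2.
  assert (Hx : bsum (Bi :: u1 ++ [B]) = 0%Z) by (cbn [bsum]; rewrite bsum_app; cbn [bsum]; lia).
  transitivity (((Bi :: u1 ++ [B]) ++ u2) ++ [Bi]). { simpl; rewrite <- ?app_assoc; simpl; rewrite <- ?app_assoc; reflexivity. }
  rewrite (comm0 _ _ Hx H2). transitivity (u2 ++ Bi :: u1 ++ ([B] ++ [Bi])).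
  { simpl; rewrite <- ?app_assoc; simpl; rewrite <- ?app_assoc; reflexivity. }
  simpl. rewrite fBBi, app_nil_r. reflexivity.
Qed.

Lemma firstn_succ (w : word) n : n < length w -> firstn (S n) w = firstn n w ++ [nth n w A].
Proof.
  revert n; induction w as [|x w IH]; intros n H; simpl in *. lia.
  destruct n; simpl. reflexivity. rewrite IH by lia. reflexivity.
Qed.

Lemma firstn_split (w : word) a b : a <= b -> firstn b w = firstn a w ++ firstn (b - a) (skipn a w).
Proof.
  revert b w; induction a; intros b w H.
  - rewrite Nat.sub_0_r; reflexivity.
  - destruct b. lia. destruct w; simpl. rewrite firstn_nil; reflexivity.
    rewrite (IHa b w) by lia. reflexivity.
Qed.

Lemma letter_step x : (-1 <= bsum [x] <= 1)%Z.
Proof. destruct x; simpl; lia. Qed.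

Lemma letter_B x : bsum [x] = 1%Z -> x = B.
Proof. destruct x; simpl; congruence. Qed.
Lemma letter_Bi x : bsum [x] = (-1)%Z -> x = Bi.
Proof. destruct x; simpl; congruence. Qed.

Lemma ivt (f : nat -> Z) (c : Z) : forall d a,
  (forall n, a <= n < a + d -> (-1 <= f (S n) - f n <= 1)%Z) ->
  (f a >= c)%Z -> (f (a + d)%nat < c)%Z ->
  exists m, a <= m < a + d /\ f m = c /\ f (S m) = (c - 1)%Z.
Proof.
  induction d; intros a Hs Ha Hb.
  - rewrite Nat.add_0_r in Hb; lia.
  - destruct (Z_lt_ge_dec (f (S a)) c) as [Hl|Hl].
    + exists a. pose proof (Hs a ltac:(lia)). split. lia. lia.
    + destruct (IHd (S a)) as (m & H1 & H2 & H3).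
      * intros n Hn; apply Hs; lia.
      * exact Hl.
      * replace (S a + d) with (a + S d) by lia; exact Hb.
      * exists m; split; [lia|auto].
Qed.

Section S.
Variables (g w : word).
Hypothesis G : geodesic g w.

Definition P n := bsum (firstn n w).

Lemma P_step n : n < length w -> P (S n) = (P n + bsum [nth n w A])%Z.
Proof. intros; unfold P; rewrite firstn_succ, bsum_app by auto; reflexivity. Qed.

Lemma not_geo p X Y s : w = p ++ X ++ s -> weq X Y -> length Y < length X -> False.
Proof.
  intros E HXY HL.
  assert (H := G (p ++ Y ++ s)).
  assert (length w <= length (p ++ Y ++ s)).
  { apply H. rewrite E. apply weq_cong. apply weq_refl. apply weq_cong. apply weq_refl.
    apply weq_cong. apply weq_sym; exact HXY. apply weq_refl. }
  rewrite E, !length_app in H0. lia.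
Qed.

Lemma decomp i j k : i < j -> j < k -> k < length w ->
  exists p u1 u2 s, w = p ++ ([nth i w A] ++ u1 ++ [nth j w A] ++ u2 ++ [nth k w A]) ++ s
    /\ bsum u1 = (P j - P (S i))%Z /\ bsum u2 = (P k - P (S j))%Z.
Proof.
  intros Hij Hjk Hk.
  set (u1 := firstn (j - S i) (skipn (S i) w)).
  set (u2 := firstn (k - S j) (skipn (S j) w)).
  assert (E1 : firstn j w = firstn (S i) w ++ u1) by (apply firstn_split; lia).
  assert (E2 : firstn k w = firstn (S j) w ++ u2) by (apply firstn_split; lia).
  exists (firstn i w), u1, u2, (skipn (S k) w). split; [|split].
  - rewrite <- (firstn_skipn (S k) w) at 1.
    rewrite firstn_succ by lia. rewrite E2, firstn_succ by lia. rewrite E1, firstn_succ by lia.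
    rewrite <- !app_assoc. reflexivity.
  - unfold P. rewrite E1, bsum_app. lia.
  - unfold P. rewrite E2, bsum_app. lia.
Qed.

Lemma nopat i j k : i < j -> j < k -> k < length w ->
  ((nth i w A = B /\ nth j w A = Bi /\ nth k w A = B) \/
   (nth i w A = Bi /\ nth j w A = B /\ nth k w A = Bi)) ->
  P j = P (S i) -> P k = P (S j) -> False.
Proof.
  intros Hij Hjk Hk Hl H1 H2.
  destruct (decomp i j k Hij Hjk Hk) as (p & u1 & u2 & s & E & B1 & B2).
  assert (Z1 : bsum u1 = 0%Z) by lia. assert (Z2 : bsum u2 = 0%Z) by lia.
  destruct Hl as [(L1 & L2 & L3) | (L1 & L2 & L3)]; rewrite L1, L2, L3 in E.
  - eapply (not_geo p _ (u2 ++ [B] ++ u1) s E). apply pat1; auto.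
    rewrite !length_app; simpl; lia.
  - eapply (not_geo p _ (u2 ++ [Bi] ++ u1) s E). apply pat2; auto.
    rewrite !length_app; simpl; lia.
Qed.

Definition bed x := x < length w /\ (nth x w A = B \/ nth x w A = Bi).

Lemma bed_dir x t : bed x -> Z.max (P x) (P (S x)) = t ->
  (nth x w A = B /\ P x = (t - 1)%Z /\ P (S x) = t) \/
  (nth x w A = Bi /\ P x = t /\ P (S x) = (t - 1)%Z).
Proof.
  intros [Hx [E|E]] Ht; rewrite (P_step x Hx) in *; rewrite E in *; simpl bsum in *;
  [left|right]; split; auto; lia.
Qed.

Lemma steps a b : b <= length w -> forall n, a <= n < b -> (-1 <= P (S n) - P n <= 1)%Z.
Proof. intros Hb n Hn. rewrite P_step by lia. pose proof (letter_step (nth n w A)). lia. Qed.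

(* between two same-direction crossings there is an opposite one *)
Lemma between_up x y t : x < y -> y < length w -> P (S x) = t -> P y = (t - 1)%Z ->
  exists m, x < m < y /\ nth m w A = Bi /\ P m = t /\ P (S m) = (t - 1)%Z.
Proof.
  intros Hxy Hy H1 H2.
  destruct (ivt P t (y - S x) (S x)) as (m & Hm & E1 & E2).
  - intros n Hn; apply (steps (S x) y); lia.
  - lia.
  - replace (S x + (y - S x)) with y by lia. lia.
  - exists m. split. lia. split; auto. apply letter_Bi.
    rewrite P_step in E2 by lia. lia.
Qed.

Lemma between_down x y t : x < y -> y < length w -> P (S x) = (t - 1)%Z -> P y = t ->
  exists m, x < m < y /\ nth m w A = B /\ P m = (t - 1)%Z /\ P (S m) = t.
Proof.
  intros Hxy Hy H1 H2.
  destruct (ivt (fun n => - P n)%Z (1 - t)%Z (y - S x) (S x)) as (m & Hm & E1 & E2).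
  - intros n Hn; pose proof (steps (S x) y ltac:(lia) n ltac:(lia)); lia.
  - lia.
  - replace (S x + (y - S x)) with y by lia. lia.
  - exists m. split. lia. split. apply letter_B.
    rewrite P_step in E2 by lia. lia. lia.
Qed.

Lemma core i j k t : i < j -> j < k -> bed i -> bed j -> bed k ->
  Z.max (P i) (P (S i)) = t -> Z.max (P j) (P (S j)) = t -> Z.max (P k) (P (S k)) = t -> False.
Proof.
  intros Hij Hjk Bi_ Bj Bk Ti Tj Tk.
  assert (Hk : k < length w) by (destruct Bk; auto).
  destruct (bed_dir i t Bi_ Ti) as [(Li & Pi1 & Pi2) | (Li & Pi1 & Pi2)];
  destruct (bed_dir j t Bj Tj) as [(Lj & Pj1 & Pj2) | (Lj & Pj1 & Pj2)];
  destruct (bed_dir k t Bk Tk) as [(Lk & Pk1 & Pk2) | (Lk & Pk1 & Pk2)].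
  all: first
    [ apply (nopat i j k); [lia|lia|lia|tauto|lia|lia]
    | destruct (between_up i j t) as (m & Hm & Lm & Pm1 & Pm2); [lia|lia|lia|lia|];
      apply (nopat i m j); [lia|lia|lia|tauto|lia|lia]
    | destruct (between_down i j t) as (m & Hm & Lm & Pm1 & Pm2); [lia|lia|lia|lia|];
      apply (nopat i m j); [lia|lia|lia|tauto|lia|lia]
    | destruct (between_up j k t) as (m & Hm & Lm & Pm1 & Pm2); [lia|lia|lia|lia|];
      apply (nopat j m k); [lia|lia|lia|tauto|lia|lia]
    | destruct (between_down j k t) as (m & Hm & Lm & Pm1 & Pm2); [lia|lia|lia|lia|];
      apply (nopat j m k); [lia|lia|lia|tauto|lia|lia] ].
Qed.
End S.

Theorem lemma1 (g w : word) :
  geodesic g w ->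
  ~ (exists i j k : nat,
       is_bedge w i /\ is_bedge w j /\ is_bedge w k /\
       ~ same_edge g w i j /\ ~ same_edge g w i k /\ ~ same_edge g w j k /\
       edge_height g w i = edge_height g w j /\
       edge_height g w j = edge_height g w k).
Proof.
  intros G (i & j & k & Bi_ & Bj & Bk & Sij & Sik & Sjk & Hij & Hjk).
  assert (D : forall x y, ~ same_edge g w x y -> x <> y).
  { intros x y H ->; apply H; left; split; apply weq_refl. }
  apply D in Sij, Sik, Sjk.
  unfold edge_height, height, pvert in Hij, Hjk. rewrite !bsum_app in Hij, Hjk.
  fold (P w i) (P w (S i)) (P w j) (P w (S j)) (P w k) (P w (S k)) in Hij, Hjk.
  set (t := Z.max (P w i) (P w (S i))).
  assert (Ti : Z.max (P w i) (P w (S i)) = t) by reflexivity.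
  assert (Tj : Z.max (P w j) (P w (S j)) = t) by lia.
  assert (Tk : Z.max (P w k) (P w (S k)) = t) by lia.
  clearbody t. clear Hij Hjk.
  assert (i < j < k \/ i < k < j \/ j < i < k \/ j < k < i \/ k < i < j \/ k < j < i) as O by lia.
  destruct O as [O|[O|[O|[O|[O|O]]]]]; destruct O.
  - exact (core g w G i j k t H H0 Bi_ Bj Bk Ti Tj Tk).
  - exact (core g w G i k j t H H0 Bi_ Bk Bj Ti Tk Tj).
  - exact (core g w G j i k t H H0 Bj Bi_ Bk Tj Ti Tk).
  - exact (core g w G j k i t H H0 Bj Bk Bi_ Tj Tk Ti).
  - exact (core g w G k i j t H H0 Bk Bi_ Bj Tk Ti Tj).
  - exact (core g w G k j i t H H0 Bk Bj Bi_ Tk Tj Ti).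
Qed.
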